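(* Let $H$ be a real, separable, infinite-dimensional Hilbert space and $|\cdot|$ a measurable norm on $H$. Let $K$ be a closed convex subset of $H$ and $p\in H$ a point outside $K$. Then there is a measurably adapted sequence of finite-dimensional subspaces $F_1\subset F_2\subset\cdots\subset H$ with $p\in F_1$ such that $(p+F_n^\perp)\cap K=\emptyset$ for each $n\geq1$. Moreover, $p\notin\mathrm{pr}_{F_n}(K)$ for all $n\ge1$, where $\mathrm{pr}_{F_n}$ is the orthogonal projection of $H$ onto $F_n$.
   Context: A norm $|\cdot|$ on $H$ is a measurable norm if for every $\epsilon>0$ there is a finite-dimensional subspace $F_0\subset H$ such that $\mathrm{Gauss}[v\in F_1: |v|>\epsilon]<\epsilon$ for every finite-dimensional subspace $F_1\subset H$ orthogonal to $F_0$ ($\mathrm{Gauss}$ = standard Gaussian measure on $F_1$). A sequence $(F_n)_{n\geq1}$ of closed subspaces of $H$ is measurably adapted if: (i) $F_1\subset F_2\subset\cdots$; (ii) $1\leq\dim(F_{n+1}\cap F_n^\perp)<\infty$ for all $n$; (iii) $\bigcup_n F_n$ is dense in $H$; (iv) $\mathrm{Gauss}[v\in F_{n+1}\cap F_n^\perp: |v|>2^{-n}]<2^{-n}$ for every $n\ge1$. *)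

(* Defs.v *)
From HB Require Import structures.
From mathcomp Require Import all_boot all_order all_algebra.
From mathcomp Require Import all_classical all_reals all_analysis.

Set Implicit Arguments.
Unset Strict Implicit.
Unset Printing Implicit Defensive.

Import Order.TTheory GRing.Theory Num.Theory.
Local Open Scope classical_set_scope.
Local Open Scope ring_scope.

Section Hilbert.
Variables (R : realType) (V : lmodType R) (ip : V -> V -> R).

Definition hnorm (v : V) : R := Num.sqrt (ip v v).

Definition inner_product_axioms : Prop :=
  [/\ (forall u v, ip u v = ip v u),
      (forall a u v w, ip (a *: u + v) w = a * ip u w + ip v w),
      (forall v, 0 <= ip v v) &
      (forall v, ip v v = 0 -> v = 0)].

Definition lincomb (e : seq V) (x : seq R) : V :=
  \sum_(i < size e) x`_i *: e`_i.

Definition span (s : seq V) : set V :=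
  [set v | exists x : seq R, v = lincomb s x].

Definition complete_ip : Prop :=
  forall u : nat -> V,
    (forall eps : R, 0 < eps -> exists N, forall m n, (N <= m)%N -> (N <= n)%N ->
        hnorm (u m - u n) < eps) ->
    exists l : V, forall eps : R, 0 < eps -> exists N, forall n, (N <= n)%N ->
        hnorm (u n - l) < eps.

Definition separable_ip : Prop :=
  exists u : nat -> V, forall x eps, 0 < eps -> exists n, hnorm (x - u n) < eps.

Definition infinite_dimensional : Prop := ~ exists s : seq V, span s = setT.

Definition hilbert_space : Prop :=
  [/\ inner_product_axioms, complete_ip, separable_ip & infinite_dimensional].

Definition hclosed (A : set V) : Prop :=
  forall x, ~ A x -> exists2 r : R, 0 < r & forall y, hnorm (y - x) < r -> ~ A y.

Definition linear_subspace (F : set V) : Prop :=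
  [/\ F 0, (forall u v, F u -> F v -> F (u + v)) & (forall (a : R) u, F u -> F (a *: u))].

Definition closed_subspace (F : set V) : Prop := linear_subspace F /\ hclosed F.

Definition finite_dim_subspace (F : set V) : Prop := exists s : seq V, F = span s.

Definition orthocomp (F : set V) : set V := [set v | forall u, F u -> ip u v = 0].

Definition orthogonal_sets (F G : set V) : Prop :=
  forall u v, F u -> G v -> ip u v = 0.

Definition orthonormal (e : seq V) : Prop :=
  forall i j, (i < size e)%N -> (j < size e)%N ->
    ip e`_i e`_j = (if i == j then 1 else 0).

Definition orthonormal_basis (e : seq V) (F : set V) : Prop :=
  orthonormal e /\ span e = F.

Definition is_orth_proj (F : set V) (x y : V) : Prop := F y /\ orthocomp F (x - y).

Definition proj_image (F : set V) (K : set V) : set V :=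
  [set y | exists2 x, K x & is_orth_proj F x y].

Definition is_norm (N : V -> R) : Prop :=
  [/\ (forall u v, N (u + v) <= N u + N v),
      (forall (a : R) v, N (a *: v) = `|a| * N v) &
      (forall v, N v = 0 -> v = 0)].

End Hilbert.

(** Integration against the standard Gaussian measure on R^k, written as
    an iterated integral against the 1-dimensional standard normal law. *)
Fixpoint gauss_int (R : realType) (k : nat) (f : seq R -> \bar R) : \bar R :=
  match k with
  | 0 => f [::]
  | k'.+1 => (\int[normal_prob 0 1]_x gauss_int k' (fun s => f (x :: s)))%E
  end.

(** Gauss[v in F : P v] where e is an orthonormal basis of the
    finite-dimensional subspace F: the standard Gaussian measure on F
    is the image of the standard Gaussian on R^(size e) by x |-> sum x_i e_i. *)
Definition gauss_prob (R : realType) (V : lmodType R) (e : seq V) (P : set V)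
  : \bar R :=
  gauss_int (size e) (fun x => (\1_[set y | P (lincomb e y)] x)%:E).

Section Measurable.
Variables (R : realType) (V : lmodType R) (ip : V -> V -> R) (N : V -> R).

Definition measurable_norm : Prop :=
  is_norm N /\
  forall eps : R, 0 < eps ->
    exists F0 : set V, finite_dim_subspace F0 /\
      forall F1 : set V, finite_dim_subspace F1 -> orthogonal_sets ip F1 F0 ->
        forall e, orthonormal_basis ip e F1 ->
          (gauss_prob e [set v | (eps < N v)%R] < eps%:E)%E.

(** measurably adapted sequence (F_n)_{n >= 1}; F 0 is irrelevant *)
Definition measurably_adapted (F : nat -> set V) : Prop :=
  [/\ (forall n, (1 <= n)%N -> closed_subspace ip (F n)),
      (forall n, (1 <= n)%N -> F n `<=` F n.+1),
      (forall n, (1 <= n)%N ->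
          finite_dim_subspace (F n.+1 `&` orthocomp ip (F n)) /\
          exists2 v, (F n.+1 `&` orthocomp ip (F n)) v & v <> 0),
      (forall x eps, 0 < eps -> exists n, (1 <= n)%N /\
          exists2 y, F n y & hnorm ip (x - y) < eps) &
      (forall n, (1 <= n)%N ->
          forall e, orthonormal_basis ip e (F n.+1 `&` orthocomp ip (F n)) ->
            (gauss_prob e [set v | (2%:R ^- n < N v)%R] < (2%:R ^- n)%:E)%E)].

End Measurable.

(* Main.v *)
Require Import Defs.
From HB Require Import structures.
From mathcomp Require Import all_boot all_order all_algebra.
From mathcomp Require Import all_classical all_reals all_analysis.
From mathcomp Require Import ring lra.
Import Order.TTheory GRing.Theory Num.Theory.
Local Open Scope classical_set_scope.
Local Open Scope ring_scope.
Set Implicit Arguments. Unset Strict Implicit.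
Local Notation span := Defs.span.


Section Basic.
Variables (R : realType) (V : lmodType R) (ip : V -> V -> R).
Hypothesis HA : inner_product_axioms ip.

Lemma ipC u v : ip u v = ip v u.
Proof. by case: HA. Qed.
Lemma ipDZl a u v w : ip (a *: u + v) w = a * ip u w + ip v w.
Proof. by case: HA. Qed.
Lemma ip_ge0 v : 0 <= ip v v.
Proof. by case: HA. Qed.
Lemma ip_eq0 v : ip v v = 0 -> v = 0.
Proof. by case: HA => _ _ _; apply. Qed.
Lemma ip0l w : ip 0 w = 0.
Proof. by have := ipDZl 1 0 0 w; rewrite scaler0 addr0 mul1r => h; lra. Qed.
Lemma ipDl u v w : ip (u + v) w = ip u w + ip v w.
Proof. by rewrite -(scale1r u) ipDZl mul1r scale1r. Qed.
Lemma ipZl a u w : ip (a *: u) w = a * ip u w.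
Proof. by rewrite -(addr0 (a *: u)) ipDZl ip0l addr0. Qed.
Lemma ipNl u w : ip (- u) w = - ip u w.
Proof. by rewrite -scaleN1r ipZl mulN1r. Qed.
Lemma ipBl u v w : ip (u - v) w = ip u w - ip v w.
Proof. by rewrite ipDl ipNl. Qed.
Lemma ip0r w : ip w 0 = 0.
Proof. by rewrite ipC ip0l. Qed.
Lemma ipDr u v w : ip w (u + v) = ip w u + ip w v.
Proof. by rewrite ipC ipDl !(ipC w). Qed.
Lemma ipZr a u w : ip w (a *: u) = a * ip w u.
Proof. by rewrite ipC ipZl ipC. Qed.
Lemma ipNr u w : ip w (- u) = - ip w u.
Proof. by rewrite ipC ipNl ipC. Qed.
Lemma ipBr u v w : ip w (u - v) = ip w u - ip w v.
Proof. by rewrite ipDr ipNr. Qed.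

Definition ipE := (ipDl, ipDr, ipZl, ipZr, ipNl, ipNr, ip0l, ip0r).

Lemma ip_sumZl n (f : nat -> R) (g : nat -> V) w :
  ip (\sum_(i < n) f i *: g i) w = \sum_(i < n) f i * ip (g i) w.
Proof.
elim: n => [|n IH]; first by rewrite !big_ord0 ip0l.
by rewrite !big_ord_recr /= ipDl IH ipZl.
Qed.

End Basic.


Section Span.
Variables (R : realType) (V : lmodType R) (ip : V -> V -> R).
Hypothesis HA : inner_product_axioms ip.

Lemma hnorm_lt v e : 0 < e -> (hnorm ip v < e) = (ip v v < e ^+ 2).
Proof.
by move=> e0; rewrite /hnorm -[in LHS](ger0_norm (ltW e0)) -sqrtr_sqr ltr_sqrt ?exprn_gt0.
Qed.

Lemma sub_sum (F : set V) n (f : nat -> R) (g : nat -> V) :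
  linear_subspace F -> (forall i, (i < n)%N -> F (g i)) ->
  F (\sum_(i < n) f i *: g i).
Proof.
case=> F0 FD FZ Hg; elim: n Hg => [|n IH] Hg; first by rewrite big_ord0.
rewrite big_ord_recr /=; apply: FD; first by apply: IH => i /ltnW; apply: Hg.
by apply: FZ; apply: Hg.
Qed.

Lemma spanE (s : seq V) v :
  span s v <-> exists f : nat -> R, v = \sum_(i < size s) f i *: s`_i.
Proof.
split=> [[x ->]|[f ->]]; first by exists (fun i => x`_i).
exists (mkseq f (size s)); rewrite /lincomb; apply: eq_bigr => i _.
by rewrite nth_mkseq.
Qed.

Lemma span_lin (s : seq V) : linear_subspace (span s).
Proof.
split.
- by apply/spanE; exists (fun=> 0); rewrite big1 // => i _; rewrite scale0r.
- move=> u v /spanE[f ->] /spanE[g ->]; apply/spanE; exists (fun i => f i + g i).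
  by rewrite -big_split /=; apply: eq_bigr => i _; rewrite scalerDl.
- move=> a u /spanE[f ->]; apply/spanE; exists (fun i => a * f i).
  by rewrite scaler_sumr; apply: eq_bigr => i _; rewrite scalerA.
Qed.

Lemma span_mem (s : seq V) i : (i < size s)%N -> span s s`_i.
Proof.
move=> hi; apply/spanE; exists (fun j => (j == i)%:R).
rewrite (bigD1 (Ordinal hi)) //= eqxx scale1r big1 ?addr0 // => j /eqP hj.
case: eqP => [hji|]; last by rewrite scale0r.
by exfalso; apply: hj; apply/val_inj.
Qed.

Lemma span_min {s : seq V} {F : set V} :
  linear_subspace F -> (forall i, (i < size s)%N -> F s`_i) -> span s `<=` F.
Proof. by move=> hF hs v /spanE[f ->]; exact: (@sub_sum F (size s) f (fun i => s`_i)). Qed.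

Lemma orthocomp_lin (F : set V) : linear_subspace (orthocomp ip F).
Proof.
split => [u Fu|u v hu hv w Fw|a u hu w Fw]; first by rewrite ip0r.
  by rewrite ipDr // hu // hv // addr0.
by rewrite ipZr // hu // mulr0.
Qed.

Lemma ker_lin v : linear_subspace [set u | ip u v = 0].
Proof.
split => [|u w /= hu hw|a u /= hu]; first by rewrite /= ip0l.
  by rewrite ipDl // hu hw addr0.
by rewrite ipZl // hu mulr0.
Qed.

Lemma orth_span (s : seq V) v :
  (forall i, (i < size s)%N -> ip s`_i v = 0) -> orthocomp ip (span s) v.
Proof. by move=> hs u su; exact: (@span_min s _ (ker_lin v) hs u su). Qed.

Lemma span_catl (s t : seq V) : span s `<=` span (s ++ t).
Proof.
apply: span_min; first exact: span_lin.
move=> i hi; have -> : s`_i = (s ++ t)`_i by rewrite nth_cat hi.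
by apply: span_mem; rewrite size_cat ltn_addr.
Qed.

Lemma span_catr (s t : seq V) : span t `<=` span (s ++ t).
Proof.
apply: span_min; first exact: span_lin.
move=> i hi; have -> : t`_i = (s ++ t)`_(size s + i) by rewrite nth_cat ltnNge leq_addr /= addKn.
by apply: span_mem; rewrite size_cat ltn_add2l.
Qed.

Lemma span_cons (a : V) s : span s `<=` span (a :: s).
Proof. exact: (@span_catr [:: a] s). Qed.

Lemma span_head (a : V) s : span (a :: s) a.
Proof. exact: (@span_mem (a :: s) 0). Qed.

Lemma ip_orth (F : set V) u v : F u -> orthocomp ip F v -> ip u v = 0.
Proof. by move=> Fu hv; apply: hv. Qed.

Lemma proj_ex (s : seq V) x :
  exists y, span s y /\ orthocomp ip (span s) (x - y).
Proof.
elim: s x => [|a s IH] x.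
  exists 0; split; first by apply/spanE; exists (fun=> 0); rewrite big_ord0.
  by move=> u /spanE[f ->]; rewrite big_ord0 ip0l.
have [ya [ya1 ya2]] := IH a; have [yx [yx1 yx2]] := IH x.
have sub := @span_cons a s.
have lin := @span_lin (a :: s).
set b := a - ya.
have bspan : span (a :: s) b.
  by case: lin => _ hD hZ; rewrite /b -scaleN1r; apply: hD; [apply: span_head | apply: hZ; apply: sub].
have bort : orthocomp ip (span s) b by [].
have [b0|bn0] := eqVneq (ip b b) 0.
  have bz : b = 0 by exact: ip_eq0 HA _ b0.
  have ea : a = ya by apply/eqP; rewrite -subr_eq0 -/b bz.
  exists yx; split; first by apply: sub.
  apply: orth_span => -[|i] /= hi; first by rewrite ea; apply: yx2.
  by apply: yx2; apply: span_mem.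
set c := ip b (x - yx) / ip b b.
exists (yx + c *: b); split.
  by case: lin => _ hD hZ; apply: hD; [apply: sub | apply: hZ].
have eq1 : x - (yx + c *: b) = (x - yx) - c *: b by rewrite opprD addrA.
rewrite eq1; apply: orth_span => -[|i] /= hi.
  have ha : a = b + ya by rewrite /b subrK.
  have yb : ip ya b = 0 := ya2 ya ya1.
  have e1 : ip a (x - yx) = ip b (x - yx).
    by rewrite {1}ha (ipDl HA) (yx2 ya ya1) addr0.
  have e2 : ip a b = ip b b by rewrite {1}ha (ipDl HA) yb addr0.
  by rewrite (ipBr HA) (ipZr HA) e1 e2 /c divfK // subrr.
have si := span_mem hi.
have sb : ip s`_i b = 0 := ya2 _ si.
by rewrite (ipBr HA) (ipZr HA) (yx2 _ si) sb mulr0 subrr.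
Qed.

End Span.


Section Proj.
Variables (R : realType) (V : lmodType R) (ip : V -> V -> R).
Hypothesis HA : inner_product_axioms ip.

Definition projf (s : seq V) (x : V) : V := proj1_sig (cid (proj_ex HA s x)).

Lemma projP s x : span s (projf s x) /\ orthocomp ip (span s) (x - projf s x).
Proof. exact: (proj2_sig (cid (proj_ex HA s x))). Qed.

Lemma ip_self_sub u v : ip (u - v) (u - v) = ip u u - 2 * ip u v + ip v v.
Proof.
rewrite (ipBl HA) !(ipBr HA) (ipC HA v u); ring.
Qed.

Lemma span_closed s : hclosed ip (span s).
Proof.
move=> x nx; set y0 := projf s x; have [sy0 oy0] := projP s x.
have pos : 0 < ip (x - y0) (x - y0).
  rewrite lt_neqAle ip_ge0 // andbT eq_sym; apply/negP => /eqP h.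
  by apply: nx; have := ip_eq0 HA h => /eqP; rewrite subr_eq0 => /eqP ->.
exists (hnorm ip (x - y0)); first by rewrite /hnorm sqrtr_gt0.
move=> y hy sy; move: hy; rewrite /hnorm ltr_sqrt // => hy.
have e : y - x = (y - y0) - (x - y0) by rewrite opprB addrA subrK.
have syy : span s (y - y0).
  by case: (span_lin s) => _ hD hZ; rewrite -scaleN1r; apply: hD => //; apply: hZ.
move: hy; rewrite e ip_self_sub (oy0 _ syy).
have := ip_ge0 HA (y - y0); lra.
Qed.

Lemma span_closed_sub s : closed_subspace ip (span s).
Proof. by split; [apply: span_lin | apply: span_closed]. Qed.

Lemma lin_inter (F G : set V) : linear_subspace F -> linear_subspace G ->
  linear_subspace (F `&` G).
Proof.
case=> F0 FD FZ [G0 GD GZ]; split => //.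
- by move=> u v [? ?] [? ?]; split; [apply: FD | apply: GD].
- by move=> a u [? ?]; split; [apply: FZ | apply: GZ].
Qed.

Definition incr_gen (s t : seq V) : seq V :=
  mkseq (fun i => s`_i - projf t s`_i) (size s).

Lemma incr_gen_sub s t : span t `<=` span s ->
  span (incr_gen s t) `<=` span s `&` orthocomp ip (span t).
Proof.
move=> ts; apply: span_min; first by apply: lin_inter; [apply: span_lin | apply: orthocomp_lin].
move=> i; rewrite size_mkseq => hi; rewrite nth_mkseq //.
have [p1 p2] := projP t s`_i; split => //.
case: (span_lin s) => _ hD hZ; rewrite -scaleN1r; apply: hD; first exact: span_mem.
by apply: hZ; apply: ts.
Qed.

Lemma incr_eq s t : span t `<=` span s ->
  span s `&` orthocomp ip (span t) = span (incr_gen s t).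
Proof.
move=> ts; apply/seteqP; split; last exact: incr_gen_sub.
move=> v [/spanE[f ev] ov].
set w := \sum_(i < size s) f i *: (s`_i - projf t s`_i).
have sw : span (incr_gen s t) w.
  apply/spanE; exists f; rewrite size_mkseq; apply: eq_bigr => i _.
  by rewrite nth_mkseq.
have [_ ow] := incr_gen_sub ts sw.
have vw : v - w = \sum_(i < size s) f i *: projf t s`_i.
  rewrite ev /w -sumrB; apply: eq_bigr => i _.
  by rewrite scalerBr opprB addrC subrK.
have svw : span t (v - w).
  rewrite vw; apply: (@sub_sum _ _ _ _ f (fun i => projf t s`_i)); first exact: span_lin.
  by move=> i _; case: (projP t s`_i).
have : ip (v - w) (v - w) = 0.
  by rewrite (ipBr HA) (ov _ svw) (ow _ svw) subrr.
by move/(ip_eq0 HA)/eqP; rewrite subr_eq0 => /eqP ->.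
Qed.

Lemma incr_nonzero s t z : span t `<=` span s -> span s z -> ~ span t z ->
  exists2 v, (span s `&` orthocomp ip (span t)) v & v <> 0.
Proof.
move=> ts sz nz; have [p1 p2] := projP t z.
exists (z - projf t z); last by move/eqP; rewrite subr_eq0 => /eqP h; apply: nz; rewrite h.
split => //.
case: (span_lin s) => _ hD hZ; rewrite -scaleN1r; apply: hD => //.
by apply: hZ; apply: ts.
Qed.

End Proj.


Lemma inv_small (R : realType) (e : R) : 0 < e ->
  exists N, forall n, (N <= n)%N -> (n.+1%:R)^-1 < e.
Proof.
move=> e0; exists (Num.Def.archi_bound (e^-1)) => n hn.
have h1 : e^-1 < (Num.Def.archi_bound e^-1)%:R by apply: archi_boundP; rewrite invr_ge0 ltW.
have h2 : (Num.Def.archi_bound e^-1)%:R <= n.+1%:R :> R by rewrite ler_nat; apply: leqW.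
rewrite -[e in _ < e]invrK ltf_pV2 ?posrE ?invr_gt0 // ?ltr0Sn //.
exact: lt_le_trans h1 h2.
Qed.

Lemma conv_mem (R : realType) (V : lmodType R) (K : set V) x y (t : R) :
  convex_set K -> K x -> K y -> 0 <= t -> t <= 1 -> K (t *: x + (1 - t) *: y).
Proof.
move=> cK Kx Ky t0 t1.
have := cK x y (Itv01 t0 t1); rewrite !in_setE => /(_ Kx Ky).
by [].
Qed.

Ltac ipx HA := rewrite ?(ipBl HA, ipBr HA, ipDl HA, ipDr HA, ipZl HA, ipZr HA, ipNl HA, ipNr HA).

Section Sep.
Variables (R : realType) (V : lmodType R) (ip : V -> V -> R).
Hypothesis HA : inner_product_axioms ip.

Lemma parallelo p xm xn :
  ip (xm - xn) (xm - xn) = 2 * ip (p - xm) (p - xm) + 2 * ip (p - xn) (p - xn)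
    - 4 * ip (p - (2^-1 *: xm + (1 - 2^-1) *: xn)) (p - (2^-1 *: xm + (1 - 2^-1) *: xn)).
Proof.
ipx HA; rewrite ?(ipC HA xm p) ?(ipC HA xn p) ?(ipC HA xn xm).
by field.
Qed.


Ltac ipn HA a b c d := rewrite ?(ipC HA b a) ?(ipC HA c a) ?(ipC HA d a) ?(ipC HA c b) ?(ipC HA d b) ?(ipC HA d c).

Lemma sep_dir (K : set V) p : complete_ip ip -> hclosed ip K -> convex_set K -> ~ K p ->
  exists d, forall x, K x -> ip d (x - p) <> 0.
Proof.
move=> HC hcl cK nKp.
case: (pselect (exists x, K x)) => [[x0 Kx0]|nK]; last first.
  by exists 0 => x Kx; exfalso; apply: nK; exists x.
pose D := [set r | exists2 x, K x & r = ip (p - x) (p - x)].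
have hinf : has_inf D.
  split; first by exists (ip (p - x0) (p - x0)); exists x0.
  by exists 0 => r [x _ ->]; apply: ip_ge0.
pose del := inf D.
have lb x : K x -> del <= ip (p - x) (p - x).
  by move=> Kx; apply: (ge_inf hinf.2); exists x.
have adh n : exists x, K x /\ ip (p - x) (p - x) < del + (n.+1%:R)^-1.
  have ipos : 0 < (n.+1%:R : R)^-1 by rewrite invr_gt0 ltr0Sn.
  have [r [x Kx ->] hr] := inf_adherent ipos hinf.
  by exists x.
pose xs n := proj1_sig (cid (adh n)).
have xsK n : K (xs n) by case: (proj2_sig (cid (adh n))).
have xsb n : ip (p - xs n) (p - xs n) < del + (n.+1%:R)^-1.
  by case: (proj2_sig (cid (adh n))).
have cauchy : forall eps : R, 0 < eps -> exists N, forall m n, (N <= m)%N -> (N <= n)%N ->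
    hnorm ip (xs m - xs n) < eps.
  move=> eps e0; have e4 : 0 < eps ^+ 2 / 4 by rewrite divr_gt0 // exprn_gt0.
  have [N hN] := inv_small e4; exists N => m n Nm Nn.
  have hm := hN m Nm; have hn := hN n Nn.
  have h2a : 0 <= (2:R)^-1 by rewrite invr_ge0.
  have h2b : (2:R)^-1 <= 1 by rewrite invf_le1 // ler1n.
  have Kmid := conv_mem cK (xsK m) (xsK n) h2a h2b.
  have := lb _ Kmid; have := xsb m; have := xsb n.
  rewrite hnorm_lt // (@parallelo p (xs m) (xs n)).
  move: hm hn; set d := ip (p - (_ + _)) _; set f := ip (p - xs m) _; set g := ip (p - xs n) _; set a := (m.+1%:R)^-1; set b := (n.+1%:R)^-1; set c := eps ^+ 2 => *; lra.
have [q hq] := HC xs cauchy.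
have Kq : K q.
  apply: contrapT => nKq; have [r r0 hr] := hcl q nKq.
  have [N hN] := hq r r0.
  exact: (hr (xs N) (hN N (leqnn N)) (xsK N)).
have main x : K x -> ip (p - q) (x - q) <= 0.
  move=> Kx; apply/ler_addgt0Pr => e e0; rewrite add0r.
  pose P2 := ip (p - q) (p - q); pose X2 := ip (x - q) (x - q).
  have P20 : 0 <= P2 by apply: ip_ge0.
  have X20 : 0 <= X2 by apply: ip_ge0.
  pose A := P2 + X2 + 1.
  have A0 : 0 < A by rewrite /A; lra.
  pose t := Num.min 1 (e / (8 * A)).
  have t0 : 0 < t by rewrite lt_min ltr01 divr_gt0 // mulr_gt0.
  have t1 : t <= 1 by rewrite ge_min lexx.
  have tA : t * (8 * A) <= e.
    by rewrite -ler_pdivlMr ?mulr_gt0 // ge_min lexx orbT.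
  have te0 : 0 < t * e / 8 by rewrite divr_gt0 // mulr_gt0.
  pose ep := Num.min 1 (t * e / 8).
  have ep0 : 0 < ep by rewrite lt_min ltr01.
  have ep1 : ep <= 1 by rewrite ge_min lexx.
  have ep2 : ep <= t * e / 8 by rewrite ge_min lexx orbT.
  have te4 : 0 < t * e / 4 by rewrite divr_gt0 // mulr_gt0.
  have [N1 hN1] := hq ep ep0; have [N2 hN2] := inv_small te4.
  pose n := maxn N1 N2.
  have heta : ip (xs n - q) (xs n - q) < ep ^+ 2.
    by rewrite -hnorm_lt //; apply: hN1; rewrite leq_maxl.
  have hi : (n.+1%:R)^-1 < t * e / 4 by apply: hN2; rewrite leq_maxr.
  have epsq : ep ^+ 2 <= ep by rewrite expr2 ler_piMr // ltW.
  have Kz := conv_mem cK Kx (xsK n) (ltW t0) t1.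
  have hz := lb _ Kz; have hxs := xsb n.
  set xn := xs n in Kz hz hxs heta hi *; set i := (n.+1%:R)^-1 in hxs hi *.
  pose PX := ip (p - q) (x - q); pose Pe := ip (p - q) (xn - q).
  pose Xe := ip (x - q) (xn - q); pose e2 := ip (xn - q) (xn - q).
  pose ac := ip (p - xn) (x - xn); pose cc := ip (x - xn) (x - xn).
  have I1 : ip (p - (t *: x + (1 - t) *: xn)) (p - (t *: x + (1 - t) *: xn))
      = ip (p - xn) (p - xn) - 2 * t * ac + t ^+ 2 * cc.
    by rewrite /ac /cc; ipx HA; ipn HA p x q xn; ring.
  have I2 : t * ac = t * (PX - Pe - Xe + e2).
    by rewrite /ac /PX /Pe /Xe /e2; ipx HA; ipn HA p x q xn; ring.
  have I3 : t ^+ 2 * cc = t ^+ 2 * (X2 - 2 * Xe + e2).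
    by rewrite /cc /X2 /Xe /e2; ipx HA; ipn HA p x q xn; ring.
  have J1 : 0 <= t ^+ 2 * (X2 + 2 * Xe + e2).
    rewrite mulr_ge0 ?exprn_ge0 ?(ltW t0) //.
    have := ip_ge0 HA ((x - q) + (xn - q)).
    by rewrite /X2 /Xe /e2; ipx HA; ipn HA p x q xn; move=> h; lra.
  have J2 : 0 <= t ^+ 2 * P2 - 2 * t * Pe + e2.
    have := ip_ge0 HA (t *: (p - q) - (xn - q)).
    by rewrite /P2 /Pe /e2; ipx HA; ipn HA p x q xn; move=> h; lra.
  have J3 : 0 <= t ^+ 2 * X2 - 2 * t * Xe + e2.
    have := ip_ge0 HA (t *: (x - q) - (xn - q)).
    by rewrite /X2 /Xe /e2; ipx HA; ipn HA p x q xn; move=> h; lra.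
  have e20 : 0 <= e2 by apply: ip_ge0.
  have K1 : t * (t * (8 * A)) <= t * e by rewrite ler_wpM2l // ltW.
  have K2 : 0 <= t ^+ 2 * P2 by rewrite mulr_ge0 ?exprn_ge0 ?(ltW t0).
  have K3 : 0 <= t * e2 by rewrite mulr_ge0 ?(ltW t0).
  have e21 : e2 <= 1 by rewrite /e2; lra.
  have K4 : t ^+ 2 * e2 <= t ^+ 2 * 1 by rewrite ler_wpM2l ?exprn_ge0 ?(ltW t0).
  have K5 : 0 <= t ^+ 2 by rewrite exprn_ge0 ?(ltW t0).
  have tE : 0 < t * e by rewrite mulr_gt0.
  rewrite I1 in hz.
  have fin : 2 * t * PX < 2 * t * e.
    rewrite /A in K1; rewrite /e2 in heta.
    have e2b : e2 <= t * e / 8 by rewrite /e2; lra.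
    lra.
  have t2 : 0 < 2 * t by rewrite mulr_gt0.
  rewrite (ltr_pM2l t2) in fin.
  exact: ltW fin.
have pq : 0 < ip (p - q) (p - q).
  rewrite lt_neqAle ip_ge0 // andbT eq_sym; apply/negP => /eqP h.
  by apply: nKp; have := ip_eq0 HA h => /eqP; rewrite subr_eq0 => /eqP ->.
exists (q - p) => x Kx.
have E : ip (q - p) (x - p) = ip (p - q) (p - q) - ip (p - q) (x - q).
  by ipx HA; ipn HA p q x x; ring.
have := main x Kx; rewrite E; lra.
Qed.

End Sep.


Fixpoint build (T : Type) (step : nat -> seq T -> seq T) (n : nat) : seq T :=
  match n with 0 => [::] | k.+1 => step k (build step k) end.

Section Main.
Variables (R : realType) (V : lmodType R).

Lemma span_in (s : seq V) v : v \in s -> span s v.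
Proof.
move=> h; rewrite -(nth_index 0 h); apply: span_mem; by rewrite index_mem.
Qed.

Lemma span_subseq (s t : seq V) : {subset s <= t} -> span s `<=` span t.
Proof.
move=> st; apply: span_min; first exact: span_lin.
by move=> i hi; apply: span_in; apply: st; apply: mem_nth.
Qed.

End Main.

Unset Implicit Arguments.
Set Strict Implicit.

Theorem proposition3p3 (R : realType) (V : lmodType R) (ip : V -> V -> R)
  (N : V -> R) (K : set V) (p : V) :
  hilbert_space ip ->
  measurable_norm ip N ->
  hclosed ip K -> convex_set K -> ~ K p ->
  exists F : nat -> set V,
    [/\ measurably_adapted ip N F,
        (forall n, (1 <= n)%N -> finite_dim_subspace (F n)),
        F 1%N p,
        (forall n, (1 <= n)%N -> forall w, orthocomp ip (F n) w -> ~ K (p + w)) &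
        (forall n, (1 <= n)%N -> ~ proj_image ip (F n) K p)].
Proof.
move=> [HA HC [u HS] HI] [_ MN] hcl cK nKp.
have [d hd] := sep_dir HA HC hcl cK nKp.
have hs0 n : exists s0 : seq V, forall F1 : set V, finite_dim_subspace F1 ->
    orthogonal_sets ip F1 (span s0) -> forall e, orthonormal_basis ip e F1 ->
    (gauss_prob e [set v | (2%:R ^- n < N v)%R] < (2%:R ^- n)%:E)%E.
  have pos : 0 < (2%:R ^- n : R) by rewrite invr_gt0 exprn_gt0.
  have [F0 [[s0 ->] h]] := MN _ pos.
  by exists s0.
pose s0 n := proj1_sig (cid (hs0 n)).
have s0P n := proj2_sig (cid (hs0 n)).
have out (s : seq V) : exists z, ~ span s z.
  apply: contrapT => h; apply: HI; exists s; apply/seteqP; split => // z _.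
  by apply: contrapT => nz; apply: h; exists z.
pose zout s := proj1_sig (cid (out s)).
have zoutP s : ~ span s (zout s) := proj2_sig (cid (out s)).
pose pre k s := s ++ s0 k.+1 ++ [:: p; d; u k].
pose step k s := pre k s ++ [:: zout (pre k s)].
pose T := build step.
have TS k : T k.+1 = pre k (T k) ++ [:: zout (pre k (T k))] by [].
pose F n := span (T n).
have Fmono n : F n `<=` F n.+1.
  by apply: span_subseq => v hv; rewrite TS !mem_cat hv.
have memS k v : v \in pre k (T k) -> F k.+1 v.
  by move=> hv; apply: span_in; rewrite TS mem_cat hv.
have Fp k : F k.+1 p by apply: memS; rewrite /pre !mem_cat !inE eqxx !orbT.
have Fd k : F k.+1 d by apply: memS; rewrite /pre !mem_cat !inE eqxx !orbT.
have Fu k : F k.+1 (u k) by apply: memS; rewrite /pre !mem_cat !inE eqxx !orbT.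
have Fs0 k : span (s0 k.+1) `<=` F k.+1.
  by apply: span_subseq => v hv; rewrite TS !mem_cat hv !orbT.
have Fz k : F k.+1 (zout (pre k (T k))).
  by apply: span_in; rewrite TS mem_cat mem_seq1 eqxx orbT.
have Fnz k : ~ F k (zout (pre k (T k))).
  move=> h; apply: (zoutP (pre k (T k))).
  by apply: (span_subseq _ h) => v hv; rewrite mem_cat hv.
have incr n : finite_dim_subspace (F n.+1 `&` orthocomp ip (F n)).
  by exists (incr_gen HA (T n.+1) (T n)); exact: (incr_eq HA (Fmono n)).
exists F; split.
- split.
  + by move=> n _; apply: span_closed_sub.
  + by move=> n _; apply: Fmono.
  + move=> n _; split; first exact: incr.
    exact: (incr_nonzero HA (Fmono n) (Fz n) (Fnz n)).
  + move=> x eps e0; have [k hk] := HS x eps e0.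
    by exists k.+1; split => //; exists (u k).
  + case=> [//|k] _ e he.
    apply: (s0P k.+1 _ (incr k.+1) _ e he).
    move=> v w [_ ov] sw; rewrite (ipC HA); apply: ov; exact: Fs0.
- by move=> n _; exists (T n).
- exact: Fp.
- case=> [//|k] _ w ow Kpw.
  apply: (hd _ Kpw); rewrite addrC addKr; apply: ow; exact: Fd.
- case=> [//|k] _ [x Kx [_ ox]].
  apply: (hd _ Kx); apply: ox; exact: Fd.
Qed.
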